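(* Let $T=(V,E)$ be a subtree of $T_{\mathrm{in}}$ and $S\subseteq V$. Suppose $(u,v)\in E$ satisfies $f(V_{-v}(u)\cup\{v\},v)>\mathcal{T}$ and $S\cap V_{-v}(u)=\emptyset$. Then there exist $u',v'\in V_{-v}(u)\cup\{v\}$ such that $(u',v')$ satisfies the peaking criterion.
   Context: Let $T_{\mathrm{in}}=(V_{\mathrm{in}},E_{\mathrm{in}})$ be a finite tree; subtrees are identified with their vertex sets (''$U$ is a subtree'' means $U$ induces a connected subgraph). $f:2^{V_{\mathrm{in}}}\times V_{\mathrm{in}}\to[0,+\infty]$ is minmax monotone: (1) $f(\{s\},s)=0$, and $f(U,s)=+\infty$ if $U$ is not a subtree or $s\notin U$; (2) $s\in U_1\subseteq U_2\Rightarrow f(U_1,s)\le f(U_2,s)$; (3) if $U$ is a subtree, $s\notin U$, and $s$ is adjacent to $u\in U$, then $f(U\cup\{s\},s)\ge f(U,u)$; (4) if $U$ is a subtree, $s\in U$, and $U_1,\dots,U_t$ are the vertex sets of the components of the tree induced by $U$ minus $s$, then $f(U,s)=\max_i f(U_i\cup\{s\},s)$. Fix $\mathcal{T}\ge0$. For a tree $T=(V,E)$ and an edge $(u,v)\in E$, $T_{-v}(u)$ denotes the component of $T-v$ containing $u$, with vertex set $V_{-v}(u)$. The ordered pair $(u,v)$ satisfies the peaking criterion (relative to $T$ and $S$) if $(u,v)\in E$, $V_{-v}(u)\cap S=\emptyset$, and $f(V_{-v}(u),u)\le\mathcal{T}<f(V_{-v}(u)\cup\{v\},v)$. *)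

(* Defs.v *)
From HB Require Import structures.
From mathcomp Require Import all_boot all_order all_algebra.
Set Implicit Arguments. Unset Strict Implicit. Unset Printing Implicit Defensive.
Import Order.TTheory GRing.Theory Num.Theory.
Local Open Scope ring_scope.

(* Extended nonnegative values [0,+oo]: [Some r] is the real r, [None] is +oo. *)
Definition ext_le (R : realDomainType) (x y : option R) : bool :=
  match y with
  | None => true
  | Some b => match x with None => false | Some a => a <= b end
  end.
Definition ext_lt (R : realDomainType) (x y : option R) : bool := ~~ ext_le y x.

Section Graph.
Variables (V : finType) (e : rel V).

Definition restr (A : {set V}) : rel V := [rel x y | [&& e x y, x \in A & y \in A]].

Definition connected_set (U : {set V}) : Prop :=
  forall x y, x \in U -> y \in U -> connect (restr U) x y.

Definition acyclic : Prop :=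
  forall (x : V) (p : seq V), path e x p -> uniq (x :: p) -> (2 <= size p)%N ->
    ~~ e (last x p) x.

Definition is_tree : Prop :=
  symmetric e /\ irreflexive e /\ connected_set [set: V] /\ acyclic.

(* subtrees are identified with vertex sets inducing a connected subgraph *)
Definition subtree (U : {set V}) : Prop := connected_set U.

(* vertex set of the connected component containing u of the graph induced by A
   (empty if u \notin A) *)
Definition comp (A : {set V}) (u : V) : {set V} :=
  [set w in A | connect (restr A) u w].

Definition Vminus (U : {set V}) (v u : V) : {set V} := comp (U :\ v) u.

Definition minmax_monotone (R : realDomainType) (f : {set V} -> V -> option R) : Prop :=
  [/\
      (forall U s, ext_le (Some 0) (f U s)),
      (forall s, f [set s] s = Some 0)
      /\ (forall U s, ~ (subtree U /\ s \in U) -> f U s = None),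
      (forall U1 U2 s, subtree U1 -> subtree U2 -> s \in U1 -> U1 \subset U2 ->
          ext_le (f U1 s) (f U2 s)),
      (forall U s u, subtree U -> s \notin U -> u \in U -> e s u ->
          ext_le (f U u) (f (s |: U) s))
    &
      (forall U s, subtree U -> s \in U -> U != [set s] ->
          (forall w, w \in U :\ s -> ext_le (f (comp (U :\ s) w :|: [set s]) s) (f U s))
          /\ (exists2 w, w \in U :\ s & f U s = f (comp (U :\ s) w :|: [set s]) s))].

Definition peaking (R : realDomainType) (f : {set V} -> V -> option R) (tau : R)
    (VT S : {set V}) (u v : V) : Prop :=
  [/\ [&& e u v, u \in VT & v \in VT],
      Vminus VT v u :&: S = set0,
      ext_le (f (Vminus VT v u) u) (Some tau)
    & ext_lt (Some tau) (f (v |: Vminus VT v u) v)].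

End Graph.

(* Main.v *)
Require Import Defs.
From HB Require Import structures.
From mathcomp Require Import all_boot all_order all_algebra.
Import Order.TTheory GRing.Theory Num.Theory.
Local Open Scope ring_scope.
Set Implicit Arguments. Unset Strict Implicit.

Section Help.
Variables (V : finType) (e : rel V).

Lemma restr_path_all (A : {set V}) (x : V) p : path (restr e A) x p -> all (mem A) p.
Proof.
elim: p x => [|y p IH] x //= /andP [/and3P [_ _ hy] hp].
by rewrite hy (IH y).
Qed.

Lemma conn_mem (A : {set V}) (x y : V) : x \in A -> connect (restr e A) x y -> y \in A.
Proof.
move=> xA /connectP [p hp ->].
have := mem_last x p; rewrite inE => /orP [/eqP -> //|].
by move/(allP (restr_path_all hp)).
Qed.

Lemma restr_sym (A : {set V}) : symmetric e -> symmetric (restr e A).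
Proof. by move=> se x y; rewrite /restr /= se; case: (x \in A); case: (y \in A); rewrite ?andbF ?andbT. Qed.

Lemma comp_connected (A : {set V}) (x : V) : symmetric e -> x \in A -> connected_set e (Defs.comp e A x).
Proof.
move=> se xA.
have H : forall y, connect (restr e A) x y -> connect (restr e (Defs.comp e A x)) x y.
  move=> y /connectP [p hp ->]; apply/connectP; exists p => //.
  have hA : all (mem (Defs.comp e A x)) (x :: p).
    apply/allP => z hz; change (z \in Defs.comp e A x); rewrite inE (path_connect hp hz) andbT.
    exact: conn_mem xA (path_connect hp hz).
  apply: (sub_in_path (P := mem (Defs.comp e A x))) hA hp.
  by move=> a b ha hb /and3P [hab _ _]; rewrite /restr /= hab ha hb.
move=> y z; rewrite !inE => /andP [_ hy] /andP [_ hz].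
apply: connect_trans (H _ hz).
by rewrite (sym_connect_sym (restr_sym _ se)) H.
Qed.

Lemma nocycle (u v : V) : is_tree e -> e u v ->
  ~ connect [rel x y | e x y && ~~ ((x == u) && (y == v))] u v.
Proof.
move=> [se [irr [_ ac]]] euv /connectP [p hp hl].
case: (shortenP hp) hl => p' hp' up' _ hl.
case: p' hp' up' hl => [|y [|z q]] hp' up' /= hl.
- by move: euv; rewrite hl irr.
- by move: hp'; rewrite /= hl !eqxx andbF.
- have hpe : path e u [:: y, z & q] by apply: sub_path hp' => a b /andP [].
  have := ac u _ hpe up' isT; rewrite /= -hl.
  by rewrite se euv.
Qed.

Lemma comp_key (VT : {set V}) (u v : V) : is_tree e -> e u v ->
  u \in VT -> v \in VT -> subtree e VT ->
  forall w, w \in Vminus e VT v u :\ u ->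
  exists u1, [/\ e u1 u, u1 \in VT &
     Vminus e VT u u1 = Defs.comp e (Vminus e VT v u :\ u) w].
Proof.
move=> tr euv uVT vVT cVT w hw.
have [se [irr [_ _]]] := tr.
set W := Vminus e VT v u.
have WE : W = Defs.comp e (VT :\ v) u by [].
move: (hw); rewrite !inE => /andP [wu /andP [/andP [wv wVT] cuw]].
have wW : w \in W by move: hw; rewrite inE => /andP [].
have := cVT u w uVT wVT => /connectP [p hp hl].
case: (shortenP hp) hl => p' hp' up' _ hl.
case: p' hp' up' hl => [|u1 q] hp' up' /= hl.
  by move: wu; rewrite hl eqxx.
move: hp' => /andP [/and3P [euu1 _ u1VT] hq].
move: up'; rewrite /= => /andP [unq _].
set r1 := restr e (VT :\ u).
have hu1w : connect r1 u1 w.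
  apply/connectP; exists q => //.
  apply: (sub_in_path (P := predC1 u)) _ _ hq.
    move=> a b; rewrite !inE => ha hb /and3P [hab ha' hb'].
    by rewrite /r1 /restr /= !inE ha hb hab ha' hb'.
  apply/allP => z hz; apply/eqP => zu; move: unq; rewrite -zu hz.
  by [].
have r1s : connect_sym r1 by apply: sym_connect_sym; apply: restr_sym.
set e' := [rel x y | e x y && ~~ ((x == u) && (y == v))].
have K : forall y, connect r1 w y -> y != v.
  move=> y hy; apply/eqP => yv; apply: (nocycle tr euv).
  change (connect e' u v).
  apply: (@connect_trans _ e' w u).
    apply: (connect_sub _ cuw) => a b /and3P [hab _]; rewrite !inE => /andP [bv _].
    by apply: connect1; rewrite /e' /= hab (negbTE bv) andbF.
  rewrite -yv; apply: (connect_sub _ hy) => a b /and3P [hab]; rewrite !inE => /andP [au _] _.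
  by apply: connect1; rewrite /e' /= hab (negbTE au).
exists u1; split => //; first by rewrite se.
apply/eqP; rewrite eqEsubset; apply/andP; split; apply/subsetP => x.
- rewrite /Vminus !inE => /andP [/andP [xu xVT] hx].
  have hwx : connect r1 w x by apply: connect_trans hx; rewrite r1s.
  have wD : w \in VT :\ u :\ v by rewrite !inE wv wu wVT.
  move: hwx => /connectP [p1 hp1 ->].
  have allD : all (mem (VT :\ u :\ v)) (w :: p1).
    apply/allP => z hz; have hz' := path_connect hp1 hz.
    have zin : z \in VT :\ u by apply: conn_mem hz'; rewrite !inE wu wVT.
    by change (z \in VT :\ u :\ v); rewrite in_setD1 zin (K _ hz').
  have hpD : path (restr e (VT :\ u :\ v)) w p1.
    apply: (sub_in_path (P := mem (VT :\ u :\ v))) allD hp1.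
    by move=> a b ha hb /and3P [hab _ _]; rewrite /restr /= hab ha hb.
  have allW : all (mem (W :\ u)) (w :: p1).
    apply/allP => z hz; have hz' := path_connect hpD hz.
    have zD := allP allD z hz.
    move: (zD); rewrite /= !inE => /and3P [zv zu zVT].
    rewrite zu zv zVT /=.
    apply: (connect_trans cuw); apply: (connect_sub _ hz') => a b /and3P [hab ha hb].
    apply: connect1; move: ha hb; rewrite /restr /= !inE hab.
    by move=> /and3P [-> _ ->] /and3P [-> _ ->].
  have hpW : path (restr e (W :\ u)) w p1.
    apply: (sub_in_path (P := mem (W :\ u))) allW hpD.
    by move=> a b ha hb /and3P [hab _ _]; rewrite /restr /= hab ha hb.
  apply/andP; split.
    by move: (allP allW _ (mem_last w p1)); rewrite -topredE /= /W /Vminus !inE.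
  by apply/connectP; exists p1.
- rewrite !inE => /andP [xWu hx].
  have xVTu : x \in VT :\ u.
    by move: xWu => /and3P [xu /andP [_ xVT] _]; rewrite !inE xu xVT.
  move: xVTu; rewrite !inE => -> /=; rewrite -/r1.
  apply: (connect_trans hu1w); apply: (connect_sub _ hx) => a b /and3P [hab ha hb].
  apply: connect1; move: ha hb; rewrite /r1 /restr /= !inE hab.
  by move=> /and3P [-> /andP [_ ->] _] /and3P [-> /andP [_ ->] _].
Qed.
End Help.

Theorem lemma2 (R : realDomainType) (V : finType) (e : rel V)
    (f : {set V} -> V -> option R) (tau : R) (VT S : {set V}) (u v : V) :
  is_tree e -> minmax_monotone e f -> 0 <= tau ->
  subtree e VT -> S \subset VT ->
  [&& e u v, u \in VT & v \in VT] ->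
  ext_lt (Some tau) (f (v |: Vminus e VT v u) v) ->
  S :&: Vminus e VT v u = set0 ->
  exists u' v', [/\ u' \in v |: Vminus e VT v u, v' \in v |: Vminus e VT v u
                  & peaking e f tau VT S u' v'].
Proof.
move=> tr mm tau0 cVT _.
have [se [irr _]] := tr.
have [_ [h1a _] _ _ h4] := mm.
move: {2}#|Vminus e VT v u| (leqnn #|Vminus e VT v u|) => n.
elim: n u v => [|n IH] u v hn /and3P [euv uVT vVT] hlt hS.
all: have uv : u != v by apply/eqP => uv; move: euv; rewrite uv irr.
all: have uW : u \in Vminus e VT v u by rewrite /Vminus inE !inE uv uVT connect0.
all: have [hle|hle] := boolP (ext_le (f (Vminus e VT v u) u) (Some tau)).
- by move: hn; rewrite leqn0 => /eqP/cards0_eq WE; rewrite WE inE in uW.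
- by move: hn; rewrite leqn0 => /eqP/cards0_eq WE; rewrite WE inE in uW.
- exists u, v; split; [by rewrite in_setU1 uW orbT | by rewrite setU11 |].
  by split; rewrite ?euv ?uVT ?vVT // setIC.
- set W := Vminus e VT v u in hn hlt hS uW hle *.
  have cW : subtree e W by apply: comp_connected => //; rewrite !inE uv uVT.
  have Wne : W != [set u].
    by apply/eqP => WE; move: hle; rewrite WE h1a /= tau0.
  have [_ [w hw hfw]] := h4 W u cW uW Wne.
  have [u1 [eu1u u1VT CE]] := comp_key tr euv uVT vVT cVT hw.
  have CsW : Defs.comp e (W :\ u) w \subset W :\ u.
    by apply/subsetP => x; rewrite inE => /andP [].
  have WuW : W :\ u \subset W by apply: subD1set.
  have CW : Defs.comp e (W :\ u) w \subset W by apply: subset_trans CsW WuW.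
  have [u' [v' [hu' hv' hp]]] : exists u' v', [/\ u' \in u |: Vminus e VT u u1,
      v' \in u |: Vminus e VT u u1 & peaking e f tau VT S u' v'].
    apply: IH.
    + rewrite CE -ltnS; apply: leq_trans hn.
      rewrite (cardsD1 u W) uW add1n ltnS; exact: subset_leq_card.
    + by rewrite eu1u u1VT uVT.
    + by rewrite CE setUC -hfw /ext_lt hle.
    + apply/eqP; rewrite -subset0 -hS CE; exact: setIS.
  have sub : u |: Vminus e VT u u1 \subset v |: W.
    rewrite CE; apply/subsetP => x; rewrite in_setU1 => /orP [/eqP ->|hx].
      by rewrite in_setU1 uW orbT.
    by rewrite in_setU1 (subsetP CW _ hx) orbT.
  by exists u', v'; split => //; apply: (subsetP sub).
Qed.
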